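(* Let $p\geq1$, $\mu>0$, and let $g:\mathbb{R}^n\to\mathbb{R}\cup\{+\infty\}$ be convex. Let $\lambda^{\ast}$ be the optimal solution of $$\min_{\lambda\in\mathbb{R}^n}\Big\{g(\lambda)+\frac{\mu}{1+\frac1p}\lVert\lambda\rVert^{1+\frac1p}\Big\},$$ and suppose $\lambda^{\ast}\neq0$. Let $\lambda^k\in\mathbb{R}^n$ with $\lVert\lambda^k\rVert>0$, set $t^k=\lVert\lambda^k\rVert^{\frac1p-1}$, and let $\lambda^{k+1}=\arg\min_{\lambda\in\mathbb{R}^n}\{g(\lambda)+\frac{\mu}{2}t^k\lVert\lambda\rVert^2\}$. Then $$(\lambda^{k+1}-\lambda^{\ast})^T\Big\{\lVert\lambda^k\rVert^{1-\frac1p}\lambda^{\ast}-\lVert\lambda^{\ast}\rVert^{1-\frac1p}\lambda^{k+1}\Big\}\geq0,$$ and $$\big(\lVert\lambda^k\rVert^{1-\frac1p}-\lVert\lambda^{\ast}\rVert^{1-\frac1p}\big)(\lambda^{k+1}-\lambda^{\ast})^T\lambda^{k+1}\geq\lVert\lambda^k\rVert^{1-\frac1p}\lVert\lambda^{k+1}-\lambda^{\ast}\rVert^2.$$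
   Context: $\lVert\cdot\rVert$ is the Euclidean norm. The minimizers above are assumed to exist. This is one step of the fixed point iteration: given $\lambda^k$, set $t^k=\lVert\lambda^k\rVert^{1/p-1}$ if $\lambda^k\neq0$ and $t^k=0$ otherwise, and $\lambda^{k+1}=\arg\min_\lambda\{g(\lambda)+\frac{\mu}{2}t^k\lVert\lambda\rVert^2\}$. *)

(* Defs.v *)
From mathcomp Require Import all_boot all_order all_algebra.
From mathcomp Require Import all_classical all_reals all_analysis.
Set Implicit Arguments. Unset Strict Implicit. Unset Printing Implicit Defensive.
Import Order.TTheory GRing.Theory Num.Theory.
Local Open Scope ring_scope.

Definition dotv (R : realType) (n : nat) (u v : 'rV[R]_n) : R :=
  \sum_(i < n) u 0 i * v 0 i.

Definition enorm (R : realType) (n : nat) (u : 'rV[R]_n) : R :=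
  Num.sqrt (dotv u u).

(* g : R^n -> R \cup {+oo} convex (extended-valued convexity inequality,
   for t in the open interval ]0,1[ to avoid the 0 * +oo convention). *)
Definition ext_convex (R : realType) (n : nat) (g : 'rV[R]_n -> \bar R) : Prop :=
  (forall x, g x != -oo%E) /\
  (forall (x y : 'rV[R]_n) (t : R), 0 < t < 1 ->
     (g (t *: x + (1 - t) *: y)%R <= t%:E * g x + ((1 - t)%R)%:E * g y)%E).

Definition is_minimizer (R : realType) (n : nat) (F : 'rV[R]_n -> \bar R)
  (x : 'rV[R]_n) : Prop := forall y, (F x <= F y)%E.

(* Main.v *)
Require Import Defs.
From mathcomp Require Import all_boot all_order all_algebra.
From mathcomp Require Import all_classical all_reals all_analysis.
From mathcomp Require Import ring lra.
Import Order.TTheory GRing.Theory Num.Theory.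
Local Open Scope ring_scope.
Section S.
Variables (R : realType) (n : nat).
Implicit Types u v w : 'rV[R]_n.
Lemma dotvC u v : dotv u v = dotv v u.
Proof. by rewrite /dotv; apply: eq_bigr => i _; rewrite mulrC. Qed.
Lemma dotvDl u v w : dotv (u + v) w = dotv u w + dotv v w.
Proof. by rewrite /dotv -big_split; apply: eq_bigr => i _; rewrite !mxE mulrDl. Qed.
Lemma dotvZl (a : R) u w : dotv (a *: u) w = a * dotv u w.
Proof. by rewrite /dotv mulr_sumr; apply: eq_bigr => i _; rewrite !mxE mulrA. Qed.
Lemma dotvNl u w : dotv (- u) w = - dotv u w.
Proof. by rewrite /dotv -sumrN; apply: eq_bigr => i _; rewrite !mxE mulNr. Qed.
Lemma dotvDr u v w : dotv w (u + v) = dotv w u + dotv w v.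
Proof. by rewrite dotvC dotvDl !(dotvC w). Qed.
Lemma dotvZr (a : R) u w : dotv w (a *: u) = a * dotv w u.
Proof. by rewrite dotvC dotvZl !(dotvC w). Qed.
Lemma dotvNr u w : dotv w (- u) = - dotv w u.
Proof. by rewrite dotvC dotvNl !(dotvC w). Qed.
Lemma dotv_ge0 u : 0 <= dotv u u.
Proof. by apply: sumr_ge0 => i _; rewrite -expr2 sqr_ge0. Qed.
Lemma enorm_sq u : enorm u ^+ 2 = dotv u u.
Proof. by rewrite /enorm sqr_sqrtr // dotv_ge0. Qed.
Lemma enorm_ge0 u : 0 <= enorm u.
Proof. exact: sqrtr_ge0. Qed.
Lemma enorm_eq0 u : enorm u = 0 -> u = 0.
Proof.
move=> /eqP; rewrite /enorm sqrtr_eq0 => h.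
have h0 : dotv u u = 0 by apply/eqP; rewrite eq_le h dotv_ge0.
have := h0; rewrite /dotv => /eqP; rewrite psumr_eq0; last by move=> i _; rewrite -expr2 sqr_ge0.
move=> /allP hall; apply/matrixP => i j; rewrite ord1 mxE.
have := hall j (mem_index_enum j); rewrite implyTb mulf_eq0 orbb => /eqP ->. by [].
Qed.
End S.

Lemma bern (R : realType) (b w : R) : 0 < b <= 1 -> 0 <= w -> w `^ b <= b * w + (1 - b).
Proof.
move=> /andP[b0 b1] w0.
have [->|blt] := eqVneq b 1.
  by rewrite powRr1 // subrr addr0 mul1r.
have b1' : b < 1 by rewrite lt_neqAle blt b1.
have := @conjugate_powR R (w `^ b) 1 (b^-1) ((1 - b)^-1) (powR_ge0 _ _) ler01.
rewrite invr_gt0 b0 invr_gt0 subr_gt0 b1' !invrK => /(_ isT isT).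
rewrite addrC subrK => /(_ erefl).
by rewrite mulr1 -powRrM mulfV ?gt_eqF // powRr1 // powR1 mul1r (mulrC w).
Qed.
Lemma pow2b (R : realType) (q X : R) : 0 <= X -> X `^ (1 + q) = (X ^+ 2) `^ ((1 + q) / 2).
Proof.
move=> X0; rewrite -powR_mulrn // -powRrM; congr (_ `^ _).
by rewrite mulrC -mulrA mulVf ?mulr1 // pnatr_eq0.
Qed.
Lemma powbound (R : realType) (q s X : R) : 0 <= q <= 1 -> 0 < s -> 0 <= X ->
  X `^ (1 + q) <= s `^ (1 + q) + (1 + q) / 2 * s `^ (q - 1) * (X ^+ 2 - s ^+ 2).
Proof.
move=> /andP[q0 q1] s0 X0.
have sE : s `^ (1 + q) = s `^ (q - 1) * s ^+ 2.
  rewrite -powR_mulrn ?ltW // -powRD; last by apply/implyP => _; rewrite gt_eqF.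
  congr (_ `^ _); rewrite /=; lra.
set b := (1 + q) / 2.
have b01 : 0 < b <= 1 by apply/andP; split; rewrite /b; lra.
have s2 : 0 < s ^+ 2 by rewrite exprn_gt0.
have XE : X ^+ 2 = s ^+ 2 * (X ^+ 2 / s ^+ 2) by rewrite mulrC divfK ?gt_eqF.
rewrite pow2b // XE powRM; last 2 first.
- exact: ltW.
- by rewrite divr_ge0 ?sqr_ge0 // ltW.
rewrite -XE -(@pow2b _ q _ (ltW s0)) sE.
have hb := @bern _ _ _ b01 (divr_ge0 (sqr_ge0 X) (ltW s2)).
have P0 : 0 <= s `^ (q - 1) * s ^+ 2 by rewrite mulr_ge0 ?powR_ge0 ?sqr_ge0.
apply: le_trans (ler_wpM2l P0 hb) _.
rewrite le_eqVlt; apply/orP; left; apply/eqP.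
by field; rewrite gt_eqF.
Qed.
Lemma small_t (R : realType) (K M : R) :
  (forall t, 0 < t < 1 -> 0 <= K + t * M) -> 0 <= K.
Proof.
move=> h; rewrite leNgt; apply/negP => K0.
have [M0|M0] := leP M 0.
  have := h (2^-1); rewrite (_ : 0 < 2^-1 < 1); last by apply/andP; split; lra.
  move=> /(_ isT); lra.
have [T1|T1] := leP 1 (- K / (2 * M)).
  have := h (2^-1); rewrite (_ : 0 < 2^-1 < 1); last by apply/andP; split; lra.
  move=> /(_ isT).
  have : 2 * M <= - K by rewrite ler_pdivlMr ?mulr_gt0 // mul1r in T1.

  lra.
have t0 : 0 < - K / (2 * M) by rewrite divr_gt0 ?mulr_gt0 //; lra.
have := h (- K / (2 * M)); rewrite t0 T1 => /(_ isT).
rewrite (_ : - K / (2 * M) * M = - K / 2); last by field; rewrite gt_eqF.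
lra.
Qed.

Lemma fin_of_min (R : realType) (n : nat) (g : 'rV[R]_n -> \bar R) (h : 'rV[R]_n -> R) x x0 :
  (forall z, g z != -oo%E) -> g x0 != +oo%E ->
  (forall y, (g x + (h x)%:E <= g y + (h y)%:E)%E) -> exists G, g x = G%:E.
Proof.
move=> ninf fx0 hm; case E: (g x) => [G| |]; first by exists G.
- have := hm x0; rewrite E; move: fx0 (ninf x0); case: (g x0) => //.
- by have := ninf x; rewrite E.
Qed.

Lemma step (R : realType) (n : nat) (g : 'rV[R]_n -> \bar R) (h : 'rV[R]_n -> R) x y t G H :
  g x = G%:E -> g y = H%:E -> (forall z, g z != -oo%E) ->
  (g (t *: y + (1 - t) *: x)%R <= t%:E * g y + ((1 - t)%R)%:E * g x)%E ->
  (forall z, (g x + (h x)%:E <= g z + (h z)%:E)%E) ->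
  G + h x <= t * H + (1 - t) * G + h (t *: y + (1 - t) *: x).
Proof.
move=> gx gy ninf hc hm; have := hm (t *: y + (1 - t) *: x); move: hc.
rewrite gx gy; move: (ninf (t *: y + (1 - t) *: x)).
case: (g _) => [Gz| |] //= _.
rewrite -!EFinM -!EFinD !lee_fin; lra.
Qed.

Arguments enorm_ge0 {R n}.
Arguments enorm_eq0 {R n}.
Arguments enorm_sq {R n}.
Arguments dotvC {R n}.
Arguments fin_of_min {R n g h x} x0.
Arguments step {R n g h x y t G H}.
Arguments small_t {R K} M.
Arguments powbound {R q s X}.
Arguments bern {R b w}.

Theorem lemma4p3 (R : realType) (n : nat) (p mu : R) (g : 'rV[R]_n -> \bar R)
  (lstar lk lk1 : 'rV[R]_n) :
  1 <= p -> 0 < mu ->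
  ext_convex g -> (exists x, g x != +oo%E) ->
  is_minimizer (fun l => g l + (mu / (1 + p^-1) * enorm l `^ (1 + p^-1))%:E)%E lstar ->
  lstar != 0 ->
  0 < enorm lk ->
  is_minimizer (fun l => g l + (mu / 2 * enorm lk `^ (p^-1 - 1) * enorm l ^+ 2)%:E)%E lk1 ->
  0 <= dotv (lk1 - lstar)
         (enorm lk `^ (1 - p^-1) *: lstar - enorm lstar `^ (1 - p^-1) *: lk1)
  /\
  (enorm lk `^ (1 - p^-1) - enorm lstar `^ (1 - p^-1)) * dotv (lk1 - lstar) lk1
    >= enorm lk `^ (1 - p^-1) * enorm (lk1 - lstar) ^+ 2.
Proof.
move=> p1 mu0 [ninf conv] [x0 fx0] m1 ls0 a0 m2.
set q := p^-1.
have q01 : 0 <= q <= 1.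
  by rewrite /q invr_ge0 (le_trans ler01 p1) /= invf_le1 // (lt_le_trans ltr01 p1).
set a := enorm lk; set s := enorm lstar.
have s0 : 0 < s.
  rewrite lt_neqAle enorm_ge0 andbT; apply/eqP => /esym /enorm_eq0 h.
  by rewrite h eqxx in ls0.
have [G gx] := fin_of_min x0 ninf fx0 m1.
have [H gy] := fin_of_min x0 ninf fx0 m2.
set S := s `^ (q - 1); set A := a `^ (q - 1).
set c1 := mu / (1 + q).
set Dxx := dotv lstar lstar; set Dxy := dotv lstar lk1; set Dyy := dotv lk1 lk1.
set K := S * (Dxy - Dxx) - A * (Dyy - Dxy).
set M := (S + A) / 2 * (Dxx - 2 * Dxy + Dyy).
have K0 : 0 <= K.
  apply: ((small_t M)) => t t01.
  have h1 := step (h := fun l => mu / (1 + q) * enorm l `^ (1 + q)) gx gy ninf (conv _ _ _ t01) m1.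
  have h2 := step (h := fun l => mu / 2 * a `^ (q - 1) * enorm l ^+ 2) gy gx ninf (conv _ _ _ t01) m2.
  simpl in h1, h2.
  set xt := t *: lk1 + (1 - t) *: lstar in h1.
  set yt := t *: lstar + (1 - t) *: lk1 in h2.
  have pb := powbound q01 s0 (enorm_ge0 xt).
  have c10 : 0 <= c1 by rewrite /c1 divr_ge0 ?ltW //; case/andP: q01 => ? ?; lra.
  have pb' := ler_wpM2l c10 pb.
  have E1 : c1 * (s `^ (1 + q) + (1 + q) / 2 * s `^ (q - 1) * (enorm xt ^+ 2 - s ^+ 2))
     = c1 * s `^ (1 + q) + mu / 2 * S * (enorm xt ^+ 2 - s ^+ 2).
    rewrite /c1 /S; field; case/andP: q01 => ? ?; lra.
  rewrite E1 in pb'.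
  have Nxt : enorm xt ^+ 2 = t * t * Dyy + 2 * t * (1 - t) * Dxy + (1 - t) * (1 - t) * Dxx.
    rewrite enorm_sq /xt !(dotvDl, dotvDr, dotvZl, dotvZr) (dotvC lk1 lstar) -/Dxx -/Dxy -/Dyy.
    ring.
  have Nyt : enorm yt ^+ 2 = t * t * Dxx + 2 * t * (1 - t) * Dxy + (1 - t) * (1 - t) * Dyy.
    rewrite enorm_sq /yt !(dotvDl, dotvDr, dotvZl, dotvZr) (dotvC lk1 lstar) -/Dxx -/Dxy -/Dyy.
    ring.
  rewrite Nxt in pb'; rewrite Nyt enorm_sq -/Dyy in h2.
  rewrite enorm_sq -/Dxx in pb'.
  rewrite -/A in h2.
  have hsum : 0 <= mu / 2 * S * (t * t * Dyy + 2 * t * (1 - t) * Dxy + (1 - t) * (1 - t) * Dxx - Dxx)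
     + mu / 2 * A * (t * t * Dxx + 2 * t * (1 - t) * Dxy + (1 - t) * (1 - t) * Dyy - Dyy).
    rewrite -/c1 -/s in h1.
    lra.
  have E2 : mu / 2 * S * (t * t * Dyy + 2 * t * (1 - t) * Dxy + (1 - t) * (1 - t) * Dxx - Dxx)
     + mu / 2 * A * (t * t * Dxx + 2 * t * (1 - t) * Dxy + (1 - t) * (1 - t) * Dyy - Dyy)
     = (mu * t) * (K + t * M).
    by rewrite /K /M; field.
  rewrite E2 in hsum.
  have mt : 0 < mu * t by rewrite mulr_gt0 //; case/andP: t01.
  by rewrite pmulr_rge0 in hsum.
set a' := a `^ (1 - q); set s' := s `^ (1 - q).
have a'0 : 0 < a' by rewrite powR_gt0.
have s'0 : 0 < s' by rewrite powR_gt0.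
have SE : S = s'^-1 by rewrite /S -powRN opprB.
have AE : A = a'^-1 by rewrite /A -powRN opprB.
have E3 : dotv (lk1 - lstar) (a' *: lstar - s' *: lk1) = a' * (Dxy - Dxx) - s' * (Dyy - Dxy).
  rewrite !(dotvDl, dotvDr, dotvZr, dotvNl, dotvNr) (dotvC lk1 lstar) -/Dxx -/Dxy -/Dyy.
  ring.
have G1 : a' * (Dxy - Dxx) - s' * (Dyy - Dxy) = a' * s' * K.
  by rewrite /K SE AE; field; rewrite !gt_eqF.
have G1' : 0 <= a' * (Dxy - Dxx) - s' * (Dyy - Dxy).
  by rewrite G1 mulr_ge0 // mulr_ge0 // ltW.
split; first by rewrite E3.
have E4 : enorm (lk1 - lstar) ^+ 2 = Dyy - 2 * Dxy + Dxx.
  rewrite enorm_sq !(dotvDl, dotvDr, dotvZr, dotvNl, dotvNr) (dotvC lk1 lstar) -/Dxx -/Dxy -/Dyy.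
  ring.
have E5 : dotv (lk1 - lstar) lk1 = Dyy - Dxy.
  rewrite !(dotvDl, dotvNl) -/Dxx -/Dxy -/Dyy.
  ring.
rewrite E4 E5.
lra.
Qed.
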